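(* Let $\Pi$ be a finite, satisfiable set of linear constraints over the variables $x_1,\dots,x_D$ (each of the form $\sum_k w_k x_k + b \unrhd 0$ with $\unrhd\in\{\ge,>\}$), and let $\mathrm{CL}$ be the constraint layer built from $\Pi$ and the variable ordering $x_1,\dots,x_D$ as described in the context. Then for every sample $\tilde x\in\mathbb{R}^D$ (and every admissible choice of the $\epsilon$ values), $\mathrm{CL}(\tilde x)$ satisfies every constraint in $\Pi$. Consequently, for any generative model $m$ producing samples in $\mathbb{R}^D$, the model C-$m$ obtained by applying $\mathrm{CL}$ to every output of $m$ is compliant with $\Pi$, i.e. all samples it generates satisfy $\Pi$.
   Context: A constraint is a linear inequality $\phi:\ \sum_{k=1}^D w_k x_k + b \unrhd 0$ with $w_k,b\in\mathbb{R}$ and $\unrhd\in\{\ge,>\}$; it is strict if $\unrhd$ is $>$. A point $\tilde x\in\mathbb{R}^D$ satisfies $\phi$ if $\sum_k w_k\tilde x_k+b\unrhd 0$, and satisfies a set $\Pi$ if it satisfies every member; $\Pi$ is satisfiable if some point satisfies it. Variable $x_j$ appears positively (resp. negatively) in $\phi$ if $w_j>0$ (resp. $w_j<0$). For a set $\Gamma$ of constraints, $\Gamma^+_j$ (resp. $\Gamma^-_j$) is the subset in which $x_j$ appears positively (resp. negatively). Reduction: for $\phi^1=\sum_k w^1_kx_k+b^1\unrhd^1 0\in\Gamma^-_j$ and $\phi^2=\sum_k w^2_kx_k+b^2\unrhd^2 0\in\Gamma^+_j$, $red_j(\phi^1,\phi^2)$ is $\sum_{k\ne j}(w^1_k|w^2_j|+w^2_k|w^1_j|)x_k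 + b^1|w^2_j|+b^2|w^1_j| \unrhd 0$, where $\unrhd$ is $\ge$ if both $\unrhd^1,\unrhd^2$ are $\ge$, and $>$ otherwise. Sets $\Pi_i$: $\Pi_D=\Pi$, and for $i<D$, with $j=i+1$, $\Pi_i=(\Pi_j\setminus(\Pi^-_j\cup\Pi^+_j))\cup\{red_j(\phi^1,\phi^2):\phi^1\in\Pi^-_j,\phi^2\in\Pi^+_j\}$, where $\Pi^\pm_j$ means $(\Pi_j)^\pm_j$. (Thus only $x_1,\dots,x_i$ occur in $\Pi_i$; we write $\Pi_i^\pm$ for $(\Pi_i)^\pm_i$.) For $\phi=\sum_kw_kx_k+b\unrhd0$ with $w_i\neq0$, let $\varepsilon^\phi_i=-\sum_{k\ne i}(w_k/w_i)x_k-b/w_i$; for $\phi\in\Pi_i$ it depends only on $x_1,\dots,x_{i-1}$, and $\phi\in\Pi_i^+$ is equivalent to $x_i-\varepsilon_i^\phi\unrhd0$, $\phi\in\Pi_i^-$ to $\varepsilon_i^\phi - x_i\unrhd 0$. Constraint layer: given $\tilde x\in\mathbb{R}^D$, $\mathrm{CL}(\tilde x)\in\mathbb{R}^D$ is computed coordinatewise for $i=1,\dots,D$. Let $\varepsilon^\phi_i(\mathrm{CL}(\tilde x))$ denote $\varepsilon^\phi_i$ evaluated at the already computed values $\mathrm{CL}(\tilde x)_1,\dots,\mathrm{CL}(\tilde x)_{i-1}$, and set $ub_i=\min\{\varepsilon^\phi_i(\mathrm{CL}(\tilde x)):\phi\in\Pi_i^-\}$, $lb_i=\max\{\varepsilon^\phi_i(\mathrm{CL}(\tilde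 x)):\phi\in\Pi_i^+\}$ (with $\min\emptyset=+\infty$, $\max\emptyset=-\infty$). Then $\mathrm{CL}(\tilde x)_i=\min^i(\max^i(\tilde x_i,lb_i),ub_i)$, where $\max^i(a,lb_i)$ equals $v=\max(a,lb_i)$ unless some strict $\phi\in\Pi_i^+$ has $v=\varepsilon^\phi_i(\mathrm{CL}(\tilde x))$, in which case it equals $v+\epsilon$ for a chosen $\epsilon>0$ small enough that $lb_i+\epsilon< ub_i$; symmetrically $\min^i(a,ub_i)$ equals $u=\min(a,ub_i)$ unless some strict $\phi\in\Pi_i^-$ has $u=\varepsilon^\phi_i(\mathrm{CL}(\tilde x))$, in which case it equals $u-\epsilon$ for a chosen $\epsilon>0$ small enough that $ub_i-\epsilon>lb_i$. The chosen positive numbers are called the $\epsilon$ values used to compute $\mathrm{CL}(\tilde x)$. *)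

(* Defs.v *)
From mathcomp Require Import all_boot all_order all_algebra.
Set Implicit Arguments. Unset Strict Implicit. Unset Printing Implicit Defensive.
Import Order.TTheory GRing.Theory Num.Theory.
Local Open Scope ring_scope.

Section Constraints.
Variables (R : realFieldType) (D : nat).

(* A linear constraint  sum_k w_k x_k + b |> 0 over variables x_0..x_{D-1}
   (0-based indexing; the paper's x_{k+1} is our index k).
   cstrict = true means '>' , false means '>='. *)
Record constr := Constr { cw : 'I_D -> R ; cb : R ; cstrict : bool }.

Definition clhs (phi : constr) (x : 'I_D -> R) : R :=
  \sum_(k < D) cw phi k * x k + cb phi.

Definition csat (phi : constr) (x : 'I_D -> R) : bool :=
  if cstrict phi then 0 < clhs phi x else 0 <= clhs phi x.

Definition sat_set (Pi : seq constr) (x : 'I_D -> R) : bool :=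
  all (fun phi => csat phi x) Pi.

Definition satisfiable (Pi : seq constr) : Prop := exists x, sat_set Pi x.

(* coefficient of variable with (nat) index j; 0 if j >= D *)
Definition wat (phi : constr) (j : nat) : R :=
  if @insub _ (fun k => k < D)%N 'I_D j is Some k then cw phi k else 0.

Definition cpos (j : nat) (G : seq constr) := [seq phi <- G | 0 < wat phi j].
Definition cneg (j : nat) (G : seq constr) := [seq phi <- G | wat phi j < 0].

(* red_j(phi1, phi2), phi1 in G^-_j, phi2 in G^+_j *)
Definition red (j : nat) (phi1 phi2 : constr) : constr :=
  Constr (fun k => if nat_of_ord k == j then 0
                   else cw phi1 k * `|wat phi2 j| + cw phi2 k * `|wat phi1 j|)
         (cb phi1 * `|wat phi2 j| + cb phi2 * `|wat phi1 j|)
         (cstrict phi1 || cstrict phi2).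

Definition fm_elim (j : nat) (G : seq constr) : seq constr :=
  [seq phi <- G | wat phi j == 0] ++
  [seq red j p1 p2 | p1 <- cneg j G, p2 <- cpos j G].

(* FM n Pi = Pi_{D-n}: Pi_D = Pi, Pi_i = elim of variable index i from Pi_{i+1}
   (0-based index i = paper's variable x_{i+1}). *)
Fixpoint FM (Pi : seq constr) (n : nat) : seq constr :=
  match n with
  | 0 => Pi
  | n'.+1 => fm_elim (D - n) (FM Pi n')
  end.

Definition Pis (Pi : seq constr) (i : nat) : seq constr := FM Pi (D - i).

(* epsilon^phi_i evaluated at the already computed values y_0..y_{i-1} *)
Definition epsv (phi : constr) (i : 'I_D) (y : 'I_D -> R) : R :=
  - (\sum_(k < D | (k < i)%N) cw phi k * y k + cb phi) / cw phi i.

Definition seqmax (s : seq R) : option R :=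
  foldr (fun a o => Some (if o is Some b then Num.max a b else a)) None s.
Definition seqmin (s : seq R) : option R :=
  foldr (fun a o => Some (if o is Some b then Num.min a b else a)) None s.

(* y_i is an admissible value of CL(x)_i, given the already computed
   coordinates y_0..y_{i-1} (lb = None means -oo, ub = None means +oo).
   Coordinate i (0-based) is the paper's x_{i+1}, handled with Pi_{i+1}. *)
Definition CL_coord (Pi : seq constr) (x y : 'I_D -> R) (i : 'I_D) : Prop :=
  let P := Pis Pi i.+1 in
  let Lp := cpos i P in
  let Ln := cneg i P in
  let lb := seqmax [seq epsv phi i y | phi <- Lp] in
  let ub := seqmin [seq epsv phi i y | phi <- Ln] in
  let v := if lb is Some l then Num.max (x i) l else x i in
  exists v' : R,
    (if has (fun phi => cstrict phi && (epsv phi i y == v)) Lp then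
       exists e : R, 0 < e /\
         (forall l u, lb = Some l -> ub = Some u -> l + e < u) /\ v' = v + e
     else v' = v) /\
    let u := if ub is Some ub' then Num.min v' ub' else v' in
    (if has (fun phi => cstrict phi && (epsv phi i y == u)) Ln then
       exists e : R, 0 < e /\
         (forall l u0, lb = Some l -> ub = Some u0 -> l < u0 - e) /\ y i = u - e
     else y i = u).

(* y is a possible output CL(x) of the constraint layer, for some admissible
   choice of the epsilon values *)
Definition CL_out (Pi : seq constr) (x y : 'I_D -> R) : Prop :=
  forall i : 'I_D, CL_coord Pi x y i.

Definition Cmodel_sample (Pi : seq constr) (Omega : Type)
  (m : Omega -> 'I_D -> R) (y : 'I_D -> R) : Prop :=
  exists w : Omega, CL_out Pi (m w) y.

Definition compliant (Pi : seq constr) (S : ('I_D -> R) -> Prop) : Prop :=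
  forall y, S y -> sat_set Pi y.

End Constraints.

(* Main.v *)
Require Import Defs.
From mathcomp Require Import all_boot all_order all_algebra.
From mathcomp Require Import ring lra zify.
From Stdlib Require List.
Import Order.TTheory GRing.Theory Num.Theory.
Local Open Scope ring_scope.



Section ListIn.
Variable T : Type.

Lemma allIn (P : pred T) (s : seq T) :
  all P s <-> (forall x, List.In x s -> P x).
Proof.
elim: s => [|a s IH] /=; first by split.
split.
- move/andP=> [Pa /IH Hs] x [<-|Hx]; [exact: Pa| exact: Hs].
- move=> H; apply/andP; split; first by apply: H; left.
  by apply/IH => x Hx; apply: H; right.
Qed.

Lemma hasIn (P : pred T) (s : seq T) :
  has P s <-> (exists x, List.In x s /\ P x).
Proof.
elim: s => [|a s IH] /=; first by split => // [[x []]].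
split.
- case/orP => [Pa|/IH [x [Hx Px]]]; first by exists a; split=> //; left.
  by exists x; split=> //; right.
- move=> [x [[<-|Hx] Px]]; first by rewrite Px.
  by apply/orP; right; apply/IH; exists x.
Qed.

Lemma filterIn (P : pred T) x (s : seq T) :
  List.In x (filter P s) <-> List.In x s /\ P x.
Proof.
elim: s => [|a s IH] /=; first by split => // [[]].
case Pa: (P a) => /=; split.
- by case=> [<-|/IH [H1 H2]]; split => //; [left|right].
- by case=> [[<-|H1] H2]; [left| right; apply/IH].
- by move/IH=> [H1 H2]; split => //; right.
- by case=> [[E|H1] H2]; [subst; rewrite Pa in H2| apply/IH].
Qed.

Lemma catIn x (s1 s2 : seq T) :
  List.In x (s1 ++ s2) <-> List.In x s1 \/ List.In x s2.
Proof.
elim: s1 => [|a s IH] /=; first by split => [|[[]|]]; [right|].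
split.
- by case=> [<-|/IH [H|H]]; [left;left|left;right|right].
- by case=> [[<-|H]|H]; [left|right;apply/IH;left|right;apply/IH;right].
Qed.

Lemma mapIn (U : Type) (f : T -> U) x (s : seq T) :
  List.In x s -> List.In (f x) (map f s).
Proof. by elim: s => [|a s IH] //= [<-|H]; [left|right; apply: IH]. Qed.

End ListIn.

Lemma allpairsIn (T U V : Type) (f : T -> U -> V) x y s t :
  List.In x s -> List.In y t -> List.In (f x y) [seq f a b | a <- s, b <- t].
Proof.
elim: s => [|a s IH] //= Hx Hy; apply (proj2 (catIn _ _ _ _)).
case: Hx => [<-|Hx]; [left; exact: mapIn| right; exact: IH].
Qed.



Section Max.
Variable R : realFieldType.
Variable T : Type.

Lemma seqmax_none (e : T -> R) s : seqmax [seq e p | p <- s] = None -> s = [::].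
Proof. by case: s. Qed.

Lemma seqmin_none (e : T -> R) s : seqmin [seq e p | p <- s] = None -> s = [::].
Proof. by case: s. Qed.

Lemma seqmax_some (e : T -> R) s l : seqmax [seq e p | p <- s] = Some l ->
  (forall p, List.In p s -> e p <= l) /\ exists p, List.In p s /\ e p = l.
Proof.
elim: s l => [|a s IH] l //=.
case E: (seqmax [seq e p | p <- s]) => [b|] [<-].
- have [H1 [p [Hp Hpb]]] := IH b E.
  split.
  + move=> q [<-|Hq]; first by rewrite le_max lexx.
    by rewrite le_max (H1 q Hq) orbT.
  + rewrite maxEle; case: ifP => _; first by exists p; split=> //; right.
    by exists a; split=> //; left.
- have -> : s = [::] by case: (s) E.
  by split=> [q [<-|[]]|]; [ | exists a; split=> //; left].
Qed.

Lemma seqmin_some (e : T -> R) s l : seqmin [seq e p | p <- s] = Some l ->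
  (forall p, List.In p s -> l <= e p) /\ exists p, List.In p s /\ e p = l.
Proof.
elim: s l => [|a s IH] l //=.
case E: (seqmin [seq e p | p <- s]) => [b|] [<-].
- have [H1 [p [Hp Hpb]]] := IH b E.
  split.
  + move=> q [<-|Hq]; first by rewrite ge_min lexx.
    by rewrite ge_min (H1 q Hq) orbT.
  + rewrite minEle; case: ifP => _; first by exists a; split=> //; left.
    by exists p; split=> //; right.
- have -> : s = [::] by case: (s) E.
  by split=> [q [<-|[]]|]; [ | exists a; split=> //; left].
Qed.
End Max.



Arguments seqmax_none {R T e s}.
Arguments seqmin_none {R T e s}.
Arguments seqmax_some {R T e s l}.
Arguments seqmin_some {R T e s l}.
Arguments hasIn {T P s}.

Lemma notHas (T : Type) (P : pred T) s : ~~ has P s -> forall x, List.In x s -> ~~ P x.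
Proof. move=> H x Hx; apply/negP => Px; move/negP: H; apply; apply/hasIn; by exists x. Qed.

Lemma key (R : realFieldType) (T : Type) (e : T -> R) (st : T -> bool) (Lp Ln : seq T) (xi yi : R) :
  (forall p1 p2, List.In p1 Ln -> List.In p2 Lp -> e p2 <= e p1 /\ (st p1 || st p2 -> e p2 < e p1)) ->
  (let lb := seqmax [seq e phi | phi <- Lp] in
   let ub := seqmin [seq e phi | phi <- Ln] in
   let v := if lb is Some l then Num.max xi l else xi in
   exists v' : R,
    (if has (fun phi => st phi && (e phi == v)) Lp then
       exists e0 : R, 0 < e0 /\
         (forall l u, lb = Some l -> ub = Some u -> l + e0 < u) /\ v' = v + e0
     else v' = v) /\
    let u := if ub is Some ub' then Num.min v' ub' else v' in
    (if has (fun phi => st phi && (e phi == u)) Ln then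
       exists e0 : R, 0 < e0 /\
         (forall l u0, lb = Some l -> ub = Some u0 -> l < u0 - e0) /\ yi = u - e0
     else yi = u)) ->
  (forall p, List.In p Lp -> if st p then e p < yi else e p <= yi) /\
  (forall p, List.In p Ln -> if st p then yi < e p else yi <= e p).
Proof.
move=> Hred; cbv zeta; move=> [v' [Hv' Hy]].
set v := (if _ is Some l then _ else _) in Hv' Hy.
set u := (if seqmin _ is Some ub' then _ else _) in Hy.
have F1 : forall p, List.In p Lp -> e p <= v' /\ (st p -> e p < v').
  move=> p Hp.
  case Elb: (seqmax [seq e phi | phi <- Lp]) => [l|] in v Hv' Hy *; last first.
    by move: Hp; rewrite (seqmax_none Elb).
  have [Hub _] := seqmax_some Elb.
  have epl := Hub p Hp.
  have lv : l <= v by rewrite /v le_max lexx orbT.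
  case: ifP Hv' => Hh.
  - move=> [e0 [He0 [_ ->]]]; split => [|_]; lra.
  - move=> ->; split => [|sp]; first lra.
    have := notHas _ _ _ (negbT Hh) p Hp; rewrite sp /= => Hne.
    by rewrite lt_neqAle Hne /=; lra.
case Eub: (seqmin [seq e phi | phi <- Ln]) => [ub|] in u Hv' Hy *; last first.
  have E0 : Ln = [::] by move: Eub; case: (Ln).
  rewrite E0 /= in Hy; rewrite E0.
  split => // p Hp.
  have [H1 H2] := F1 p Hp.
  have -> : yi = v' by rewrite Hy.
  by case: (st p) H2 => // ->.
have [Hub [p0 [Hp0 Ep0]]] := seqmin_some Eub.
have uub : u <= ub by rewrite /u ge_min lexx orbT.
case: ifP Hy => Hh.
- move=> [e0 [He0 [Hl ->]]].
  have [p1 [Hp1 /andP [sp1 /eqP Ep1]]] := proj1 (hasIn) (negbNE (negbT (negbF Hh))).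
  have ueq : u = ub by have := Hub p1 Hp1; lra.
  split => p Hp.
  + case Elb: (seqmax [seq e phi | phi <- Lp]) => [l|] in Hl *; last first.
      by move: Hp; rewrite (seqmax_none Elb).
    have [Hlb _] := seqmax_some Elb.
    have := Hlb p Hp; have := Hl l ub erefl erefl.
    case: (st p) => ? ?; lra.
  + have := Hub p Hp; case: (st p) => ?; lra.
- move=> ->; split => p Hp.
  + have [H1 H2] := F1 p Hp.
    have [H3 H4] := Hred p0 p Hp0 Hp.
    have uE : u = Num.min v' ub by [].
    case sp: (st p).
      have a := H2 sp.
      have b : e p < e p0 by apply: H4; rewrite sp orbT.
      rewrite uE lt_min; apply/andP; split; lra.
    rewrite uE le_min; apply/andP; split; lra.
  + have H1 := Hub p Hp.
    case sp: (st p); last lra.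
    have := notHas _ _ _ (negbT Hh) p Hp; rewrite sp /= => Hne.
    rewrite lt_neqAle eq_sym Hne /=; lra.
Qed.



Arguments seqmax_none {R T e s}.
Arguments seqmin_none {R T e s}.
Arguments seqmax_some {R T e s l}.
Arguments seqmin_some {R T e s l}.
Arguments hasIn {T P s}.
Arguments allIn {T P s}.
Arguments filterIn {T P x s}.
Arguments catIn {T x s1 s2}.

Lemma mapIn_inv (T U : Type) (f : T -> U) z t :
  List.In z (map f t) -> exists b, List.In b t /\ z = f b.
Proof.
elim: t => [|b t IH] //= [<-|/IH [b' [H ->]]].
- by exists b; split => //; left.
- by exists b'; split => //; right.
Qed.

Lemma allpairsIn_inv (T U V : Type) (f : T -> U -> V) z s t :
  List.In z [seq f a b | a <- s, b <- t] ->
  exists a b, List.In a s /\ List.In b t /\ z = f a b.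
Proof.
elim: s => [|a s IH] //= /catIn [H|/IH [a' [b [H1 [H2 ->]]]]].
- have [b [Hb ->]] := mapIn_inv _ _ _ _ _ H.
  by exists a, b; split; [left|split].
- by exists a', b; split; [right|split].
Qed.

Arguments mapIn_inv {T U f z t}.
Arguments allpairsIn_inv {T U V f z s t}.

Section Main.
Variables (R : realFieldType) (D : nat).
Implicit Types (phi : constr R D) (x y : 'I_D -> R).

Lemma watE phi (k : 'I_D) : wat phi k = cw phi k.
Proof. by rewrite /wat valK. Qed.

Lemma wat_out phi (j : nat) : (D <= j)%N -> wat phi j = 0.
Proof. by move=> H; rewrite /wat insubF // ltnNge H. Qed.

Lemma csatP phi x : csat phi x <-> 0 <= clhs phi x /\ (cstrict phi -> 0 < clhs phi x).
Proof.
rewrite /csat; case: (cstrict phi); split.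
- by move=> H; split => //; rewrite ltW.
- by case=> _ ->.
- by move=> H; split.
- by case.
Qed.

Lemma clhs_red (j : nat) phi1 phi2 y : (j < D)%N -> wat phi1 j < 0 -> 0 < wat phi2 j ->
  clhs (red j phi1 phi2) y = `|wat phi2 j| * clhs phi1 y + `|wat phi1 j| * clhs phi2 y.
Proof.
move=> hj H1 H2.
rewrite /clhs /= (ltr0_norm H1) (gtr0_norm H2).
have E : forall phi, wat phi j = cw phi (Ordinal hj).
  by move=> phi; rewrite -watE.
rewrite !mulrDr !mulr_sumr.
suff -> : \sum_(k < D) (if nat_of_ord k == j then 0
      else cw phi1 k * wat phi2 j + cw phi2 k * - wat phi1 j) * y k =
  \sum_(i < D) wat phi2 j * (cw phi1 i * y i) + \sum_(i < D) - wat phi1 j * (cw phi2 i * y i).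
  ring.
rewrite -big_split /=; apply: eq_bigr => k _.
case: eqP => [Hk|Hk]; last ring.
have -> : k = Ordinal hj by apply: val_inj.
rewrite !E; ring.
Qed.

Lemma red_sat (j : nat) phi1 phi2 y : (j < D)%N -> wat phi1 j < 0 -> 0 < wat phi2 j ->
  csat phi1 y -> csat phi2 y -> csat (red j phi1 phi2) y.
Proof.
move=> hj H1 H2 /csatP [a1 b1] /csatP [a2 b2]; apply/csatP.
rewrite clhs_red // (ltr0_norm H1) (gtr0_norm H2) /=.
split; first nra.
case/orP => s; [have := b1 s | have := b2 s]; nra.
Qed.

Lemma fm_sat (j : nat) (G : seq (constr R D)) y : sat_set G y -> sat_set (fm_elim j G) y.
Proof.
rewrite /sat_set => /allIn H; apply/allIn => phi /catIn [/filterIn [Hp _]|Hp].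
  exact: H.
have [a [b [Ha [Hb ->]]]] := allpairsIn_inv Hp.
move/filterIn: Ha => [Ha1 Ha2]; move/filterIn: Hb => [Hb1 Hb2].
case: (ltnP j D) => hj.
- by apply: red_sat => //; apply: H.
- by move: Ha2; rewrite wat_out // ltxx.
Qed.

Lemma FM_sat (Pi : seq (constr R D)) y n : sat_set Pi y -> sat_set (FM Pi n) y.
Proof. by move=> H; elim: n => //= n IH; apply: fm_sat. Qed.


Lemma FM_zero (Pi : seq (constr R D)) m phi : List.In phi (FM Pi m) ->
  forall k : 'I_D, (D - m <= k)%N -> cw phi k = 0.
Proof.
elim: m phi => [|m IH] phi /=.
  by move=> _ k; rewrite subn0 leqNgt ltn_ord.
set j := (D - m.+1)%N.
move=> /catIn [/filterIn [Hp /eqP Hw]|Hp] k Hk.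
- case: (eqVneq (nat_of_ord k) j) => Hkj.
    by rewrite -watE Hkj.
  apply: (IH _ Hp k); have := ltn_ord k; move: Hkj Hk; rewrite /j; lia.
- have [a [b [Ha [Hb ->]]]] := allpairsIn_inv Hp.
  move/filterIn: Ha => [Ha _]; move/filterIn: Hb => [Hb _].
  rewrite /=; case: eqP => // Hkj.
  have Hk' : (D - m <= k)%N by have := ltn_ord k; move: Hkj Hk; rewrite /j; lia.
  by rewrite (IH a Ha k Hk') (IH b Hb k Hk'); ring.
Qed.

Lemma Pis_succ (Pi : seq (constr R D)) (i : nat) : (i < D)%N ->
  Pis Pi i = fm_elim i (Pis Pi i.+1).
Proof.
move=> hi; rewrite /Pis.
have -> : (D - i = (D - i.+1).+1)%N by lia.
rewrite /=; have -> : (D - (D - i.+1).+1 = i)%N by lia.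
by [].
Qed.

Lemma clhs_eps (i : 'I_D) phi y : (forall k : 'I_D, (i < k)%N -> cw phi k = 0) ->
  cw phi i != 0 -> clhs phi y = cw phi i * (y i - epsv phi i y).
Proof.
move=> Hz Hw; rewrite /clhs /epsv.
rewrite (bigID (fun k : 'I_D => (k < i)%N)) /= [\sum_(k < D | ~~ _) _](bigD1 i) /=; last by rewrite ltnn.
rewrite [\sum_(k < D | ~~ _ && _) _]big1 ?addr0; last first.
  move=> k /andP [Hk Hne]; rewrite Hz ?mul0r //.
  rewrite ltn_neqAle leqNgt Hk andbT; apply/negP => /eqP E.
  by move/eqP: Hne; apply; apply: val_inj.
by field.
Qed.

Lemma clhs_const phi y : (forall k : 'I_D, cw phi k = 0) -> clhs phi y = cb phi.
Proof. by move=> Hz; rewrite /clhs big1 ?add0r // => k _; rewrite Hz mul0r. Qed.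

End Main.



Arguments FM_zero {R D Pi m phi}.
Arguments FM_sat {R D Pi y}.
Arguments clhs_const {R D phi}.
Arguments clhs_eps {R D i phi}.
Arguments clhs_red {R D j phi1 phi2 y}.
Arguments csatP {R D phi x}.
Arguments watE {R D}.
Arguments Pis_succ {R D Pi i}.
Arguments allpairsIn {T U V} f {x y s t}.
Arguments hasIn {T P s}.
Arguments allIn {T P s}.
Arguments filterIn {T P x s}.
Arguments catIn {T x s1 s2}.

Lemma main_sat (R : realFieldType) (D : nat) (Pi : seq (constr R D)) x y x0 :
  sat_set Pi x0 -> CL_out Pi x y -> forall n, (n <= D)%N -> sat_set (Pis Pi n) y.
Proof.
move=> H0 Hcl; elim=> [|n IH] hn.
  apply/allIn => phi Hp.
  have Hz : forall k, cw phi k = 0.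
    by move=> k; apply: (FM_zero Hp); lia.
  have := proj1 allIn (FM_sat (D - 0) H0) phi Hp.
  by rewrite /csat (clhs_const _ Hz) (clhs_const _ Hz).
have hnD : (n < D)%N by [].
set i : 'I_D := Ordinal hnD.
have IH' := IH (ltnW hn).
rewrite Pis_succ // in IH'.
move/allIn: IH' => Hel.
set P := Pis Pi n.+1.
have Hz : forall q, List.In q P -> forall k : 'I_D, (i < k)%N -> cw q k = 0.
  by move=> q Hq k Hk; apply: (FM_zero Hq); rewrite /= in Hk; lia.
have Hred : forall p1 p2, List.In p1 (cneg i P) -> List.In p2 (cpos i P) ->
    epsv p2 i y <= epsv p1 i y /\ (cstrict p1 || cstrict p2 -> epsv p2 i y < epsv p1 i y).
  move=> p1 p2 H1 H2.
  have Hc := Hel _ (proj2 catIn (or_intror (allpairsIn (red i) H1 H2))).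
  move/filterIn: H1 => [H1 w1]; move/filterIn: H2 => [H2 w2].
  have hi : (i < D)%N by [].
  move/csatP: Hc; rewrite clhs_red // (ltr0_norm w1) (gtr0_norm w2).
  rewrite !watE in w1 w2 *.
  rewrite (clhs_eps y (Hz _ H1) (ltr0_neq0 w1)) (clhs_eps y (Hz _ H2) (lt0r_neq0 w2)).
  set a := cw p1 i; set b := cw p2 i; set e1 := epsv p1 i y; set e2 := epsv p2 i y.
  have -> : b * (a * (y i - e1)) + - a * (b * (y i - e2)) = (- a * b) * (e1 - e2) by ring.
  have hab : 0 < - a * b by rewrite mulr_gt0 // oppr_gt0.
  rewrite (pmulr_rge0 _ hab) (pmulr_rgt0 _ hab) => [[Ha Hb]].
  split; first lra.
  by move=> /Hb; lra.
have [Kp Kn] := @key R _ (fun q => epsv q i y) (@cstrict R D) (cpos i P) (cneg i P) (x i) (y i) Hred (Hcl i).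
apply/allIn => phi Hp.
have wE : wat phi i = cw phi i := watE phi i.
case: (ltrgt0P (cw phi i)) => hw.
- have Hin : List.In phi (cpos i P) by apply/filterIn; rewrite wE.
  move: (Kp phi Hin) => K; apply/csatP; move: K; rewrite (clhs_eps y (Hz _ Hp) (lt0r_neq0 hw)).
  rewrite (pmulr_rge0 _ hw) (pmulr_rgt0 _ hw) !subr_ge0 !subr_gt0.
  by case: (cstrict phi) => H; split => //; apply: ltW.
- have Hin : List.In phi (cneg i P) by apply/filterIn; rewrite wE.
  move: (Kn phi Hin) => K; apply/csatP; move: K; rewrite (clhs_eps y (Hz _ Hp) (ltr0_neq0 hw)).
  have hw' : 0 < - cw phi i by rewrite oppr_gt0.
  rewrite -mulrNN (pmulr_rge0 _ hw') (pmulr_rgt0 _ hw').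
  rewrite !opprB !subr_ge0 !subr_gt0.
  by case: (cstrict phi) => H; split => //; apply: ltW.
- by apply: Hel; apply/catIn; left; apply/filterIn; rewrite wE hw eqxx.
Qed.

Theorem theorem1 (R : realFieldType) (D : nat) (Pi : seq (constr R D)) :
  satisfiable Pi ->
  (forall x y : 'I_D -> R, CL_out Pi x y -> sat_set Pi y) /\
  (forall (Omega : Type) (m : Omega -> 'I_D -> R),
      compliant Pi (Cmodel_sample Pi m)).
Proof.
move=> [x0 H0].
have A : forall x y : 'I_D -> R, CL_out Pi x y -> sat_set Pi y.
  move=> x y Hcl; have := main_sat _ _ _ _ _ _ H0 Hcl D (leqnn D).
  by rewrite /Pis subnn.
split => // Omega m y [w Hw]; exact: A Hw.
Qed.
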